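(* Let $q$ be an odd prime power, $f$ a normal planar function on $\mathbb F_{q^2}$, and $\theta\in\mathbb F_{q^2}^*$ such that for every $c\in\mathbb F_q$, $\#\{x\in\mathbb F_{q^2}:\theta_1f_0(x)-\theta_0f_1(x)=c\}$ equals $q+1$ if $c\neq0$ and $1$ if $c=0$, so that $\mathcal U_\theta:=\{(x,t\theta):x\in\mathbb F_{q^2},t\in\mathbb F_q\}\cup\{(\infty)\}$ is a unital in $\Pi(f)$. Then in $\mathcal U_\theta$ the point $(\infty)$ is a vertex of Wilbrink's condition II in strong form.
   Context: A function $f:\mathbb F_{q^2}\to\mathbb F_{q^2}$ is planar if for every $a\neq0$ the map $x\mapsto f(x+a)-f(x)$ is a bijection; it is normal if moreover $f(0)=0$ and $f(a)=f(b)$ iff $a=\pm b$. For planar $f$, $\Pi(f)$ is the projective plane with points $(x,y)\in\mathbb F_{q^2}^2$ and $(a)$ for $a\in\mathbb F_{q^2}\cup\{\infty\}$, lines $L_{a,b}=\{(x,f(x+a)-b):x\in\mathbb F_{q^2}\}\cup\{(a)\}$, $N_a=\{(a,y):y\in\mathbb F_{q^2}\}\cup\{(\infty)\}$ ($a,b\in\mathbb F_{q^2}$), $L_\infty=\{(a):a\in\mathbb F_{q^2}\cup\{\infty\}\}$. A fixed $\xi\in\mathbb F_{q^2}\setminus\mathbb F_q$ is chosen; $\theta=\theta_0+\theta_1\xi$, $f(x)=f_0(x)+f_1(x)\xi$ with components in $\mathbb F_q$. A unital (set of $q^3+1$ points meeting every line in $1$ or $q+1$ points) is regarded as a design whose blocks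 are its intersections with lines meeting it in $q+1$ points. A point $v$ of the unital is a vertex of Wilbrink's condition II in strong form if for every block $B$ with $v\notin B$, every block $C$ with $v\in C$ meeting $B$, and every point $w\in C$ distinct from $v$ and from the point of $B\cap C$, there exists a block $B'\neq C$ with $w\in B'$ such that $B'$ meets every block that contains $v$ and meets $B$. *)

(* Defs.v *)
From mathcomp Require Import all_boot all_order all_algebra all_field.
Set Implicit Arguments. Unset Strict Implicit. Unset Printing Implicit Defensive.
Import GRing.Theory.
Local Open Scope ring_scope.

Section PlaneDefs.
Variable K : finFieldType.   (* plays the role of F_{q^2} *)
Variable q : nat.

(* F_q inside F_{q^2}: the elements fixed by x |-> x^q *)
Definition inFq (x : K) : bool := x ^+ q == x.

(* components w.r.t. the basis 1, xi over F_q: y = comp0 y + comp1 y * xi,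
   written out explicitly using the Frobenius y |-> y^q (requires xi^q != xi) *)
Definition comp1 (xi y : K) : K := (y - y ^+ q) / (xi - xi ^+ q).
Definition comp0 (xi y : K) : K := y - comp1 xi y * xi.

Definition planar (f : K -> K) : Prop :=
  forall a : K, a != 0 -> bijective (fun x => f (x + a) - f x).

Definition normal_planar (f : K -> K) : Prop :=
  planar f /\ f 0 = 0 /\ (forall a b : K, f a = f b <-> (a = b \/ a = - b)).

(* points of Pi(f): inl (x,y) is the affine point (x,y);
   inr (Some a) is the point (a), inr None is the point (infinity) *)
Definition point := ((K * K) + option K)%type.
(* lines: inl (a,b) is L_{a,b}; inr (inl a) is N_a; inr (inr tt) is L_infinity *)
Definition line := ((K * K) + (K + unit))%type.

Definition line_pts (f : K -> K) (l : line) : {set point} :=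
  match l with
  | inl (a, b) => [set p : point | match p with
                                   | inl (x, y) => y == f (x + a) - b
                                   | inr o => o == Some a end]
  | inr (inl a) => [set p : point | match p with
                                    | inl (x, _) => x == a
                                    | inr o => o == None end]
  | inr (inr _) => [set p : point | if p is inr _ then true else false]
  end.

Definition unitalU (theta : K) : {set point} :=
  [set p : point | match p with
                   | inl (_, y) => [exists t : K, inFq t && (y == t * theta)]
                   | inr o => o == None end].

Definition is_block (f : K -> K) (U : {set point}) (B : {set point}) : bool :=
  [exists l : line, (B == U :&: line_pts f l) && (#|U :&: line_pts f l| == q.+1)].

Definition strong_WII_vertex (f : K -> K) (U : {set point}) (v : point) : Prop :=
  v \in U /\
  forall B C : {set point},
    is_block f U B -> v \notin B ->
    is_block f U C -> v \in C -> B :&: C != set0 ->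
    forall w : point, w \in C -> w != v -> w \notin B :&: C ->
    exists B' : {set point},
      [/\ is_block f U B', B' != C, w \in B' &
          forall D : {set point}, is_block f U D -> v \in D -> D :&: B != set0 ->
            B' :&: D != set0].

End PlaneDefs.

(* Main.v *)
Require Import Defs.
From mathcomp Require Import all_boot all_order all_algebra all_field.
From mathcomp Require Import ring.
Import GRing.Theory.
Local Open Scope ring_scope.

Lemma frobD (K: finFieldType) p (hp: p \in [pchar K]) m (x y : K):
  (x+y)^+(p^m) = x^+(p^m) + y^+(p^m).
Proof.
elim: m => [|m IH]; first by rewrite expn0 !expr1.
by rewrite expnSr !exprM IH -!(pFrobenius_autE hp) rmorphD.
Qed.

Lemma frobN (K: finFieldType) p (hp: p \in [pchar K]) m (x : K):
  (-x)^+(p^m) = -(x^+(p^m)).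
Proof.
elim: m => [|m IH]; first by rewrite expn0 !expr1.
by rewrite expnSr !exprM IH -!(pFrobenius_autE hp) rmorphN.
Qed.

Definition gsh (K : finFieldType) (k : K) (pt : point K) : point K :=
  match pt with inl (x, y) => inl (x, y + k) | inr o => inr o end.
Arguments gsh {K}.

Lemma gsh_inj (K : finFieldType) (k : K) : injective (gsh k).
Proof.
apply: (can_inj (g := gsh (- k))) => [[[x y]|o]] //=.
by rewrite addrK.
Qed.

Lemma block_v (K : finFieldType) q (f : K -> K) theta (D : {set point K}) :
  is_block q f (unitalU q theta) D -> inr None \in D -> (0 < q)%N ->
  exists d, D = unitalU q theta :&: line_pts f (inr (inl d)).
Proof.
case/existsP => l /andP[/eqP -> hc] hv q0.
case: l hc hv => [[a b]|[d|[]]] hc hv.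
- by move: hv; rewrite !inE.
- by exists d.
- exfalso.
  have hs : unitalU q theta :&: line_pts f (inr (inr tt)) \subset [set inr None].
    apply/subsetP => z; rewrite !inE; case: z => [[x y]|o]; rewrite ?andbF ?andbT //.
  have := subset_leq_card hs; rewrite cards1 (eqP hc).
  by rewrite ltnS leqNgt q0.
Qed.

Arguments block_v {K q f theta D}.

Lemma shift_in (K : finFieldType) q (f : K -> K) theta a b r pt :
  (forall x y : K, (x+y)^+q = x^+q + y^+q) ->
  inFq q r -> pt \in unitalU q theta :&: line_pts f (inl (a,b)) ->
  gsh (r*theta) pt \in unitalU q theta :&: line_pts f (inl (a, b - r*theta)).
Proof.
move=> hadd hr.
case: pt => [[x y]|o]; rewrite !inE /=.
- move=> /andP[/existsP[t /andP[ht /eqP ->]] /eqP hy].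
  apply/andP; split.
    apply/existsP; exists (t + r).
    rewrite /inFq hadd (eqP ht) (eqP hr) eqxx mulrDl eqxx //.
  have -> : f (x+a) - (b - r*theta) = (f (x+a) - b) + r*theta by ring.
  by rewrite -hy.
- by [].
Qed.

Arguments shift_in {K q f theta a b r pt}.

Lemma shift_N (K : finFieldType) (f : K -> K) d k pt :
  pt \in line_pts f (inr (inl d)) -> gsh k pt \in line_pts f (inr (inl d)).
Proof. by case: pt => [[x y]|o]; rewrite !inE. Qed.

Arguments shift_N {K f d k pt}.

Theorem proposition3p8 (K : finFieldType) (p n : nat) (f : K -> K) (xi theta : K) :
  prime p -> odd p -> (0 < n)%N ->
  #|K| = ((p ^ n) ^ 2)%N ->
  xi ^+ (p ^ n) != xi ->
  normal_planar f ->
  theta != 0 ->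
  (forall c : K, inFq (p ^ n) c ->
     #|[set x : K | comp1 (p ^ n) xi theta * comp0 (p ^ n) xi (f x)
                    - comp0 (p ^ n) xi theta * comp1 (p ^ n) xi (f x) == c]|
     = (if c == 0 then 1%N else (p ^ n).+1)) ->
  strong_WII_vertex (p ^ n) f (unitalU (p ^ n) theta) (inr None).
Proof.
move=> pp op n0 cK hxi fnp th0 hcnt.
have q0 : (0 < p ^ n)%N by rewrite expn_gt0 prime_gt0.
have hch : p \in [pchar K] := card_finPcharP (etrans cK (esym (expnM p n 2))) pp.
have hadd := @frobD K p hch n.
have hneg := @frobN K p hch n.
split; first by rewrite !inE.
move=> B C hB hvB hC hvC hBC w hwC hwv hwBC.
case/existsP: hB => l /andP[/eqP eB cB].
case: l eB cB => [[a b]|[d|[]]] eB cB; last 2 first.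
- by move: hvB; rewrite eB !inE.
- by move: hvB; rewrite eB !inE.
have [c eC] := block_v hC hvC q0.
case/set0Pn: hBC => z; rewrite inE eB eC.
case: z => [[x y]|o]; rewrite !inE /=; last first.
  by case/andP => /andP[/eqP -> ].
case/andP => /andP[/existsP[u /andP[hu /eqP yu]] /eqP hy] /andP[_ /eqP xc].
subst x.
case: w hwC hwv hwBC => [[xw yw]|o]; rewrite eC !inE /=; last first.
  by case/andP => /eqP ->; rewrite eqxx.
case/andP => /existsP[s /andP[hs /eqP ys]] /eqP xwc _ _.
subst xw yw.
have hr : inFq (p ^ n) (s - u).
  by rewrite /inFq hadd hneg (eqP hs) (eqP hu).
set k := (s - u) * theta.
exists (unitalU (p ^ n) theta :&: line_pts f (inl (a, b - k))).
split.
- apply/existsP; exists (inl (a, b - k)); rewrite eqxx /=.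
  have s1 : gsh k @: B \subset unitalU (p ^ n) theta :&: line_pts f (inl (a, b - k)).
    apply/subsetP => ? /imsetP[z hz ->]; rewrite eB in hz.
    exact: shift_in.
  have hr' : inFq (p ^ n) (- (s - u)) by rewrite /inFq hneg (eqP hr).
  have s2 : gsh (- (s - u) * theta) @: (unitalU (p ^ n) theta :&: line_pts f (inl (a, b - k)))
      \subset B.
    apply/subsetP => ? /imsetP[z hz ->].
    have := shift_in hadd hr' hz.
    have -> : b - k - - (s - u) * theta = b by rewrite /k; ring.
    by rewrite eB.
  have := subset_leq_card s1; have := subset_leq_card s2.
  rewrite !card_imset; try exact: gsh_inj.
  rewrite eB (eqP cB) => h1 h2.
  by rewrite eqn_leq h1 h2.
- have h : (inr None : point K) \notin
      unitalU (p ^ n) theta :&: line_pts f (inl (a, b - k)) by rewrite !inE /= ?andbF.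
  apply/negP => /eqP e; move: h; rewrite e; move/negP; apply.
  by rewrite !inE.
- rewrite !inE /=; apply/andP; split.
    by apply/existsP; exists s; rewrite hs eqxx.
  have -> : f (c+a) - (b-k) = (f (c+a) - b) + k by ring.
  rewrite -hy yu /k; apply/eqP; ring.
- move=> D hD hvD hDB.
  have [d eD] := block_v hD hvD q0.
  case/set0Pn: hDB => z; rewrite inE => /andP[zD zB].
  have hz := shift_in hadd hr zB.
  apply/set0Pn; exists (gsh k z); rewrite inE; apply/andP; split; first exact: hz.
  move: zD; rewrite eD !inE => /andP[_ zN]; apply/andP; split.
    by move: hz; rewrite in_setI => /andP[hU _]; rewrite inE in hU.
  by case: (z) zN => [[x0 y0]|o0].
Qed.
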